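(* Let $n\ge 2$, $0\le d\le n-1$, and let $\mathbf{P}=(P_1,\dots,P_{n+1})$ be a Roy-system of dimension $n+1$ on $[Q_0,\infty)$. Then \[\underline{\delta}(\mathbf{P})\le d+(n+1)\liminf_{q\to\infty}\frac{P_1(q)+\cdots+P_{n-d}(q)}{q}.\]
   Context: A Roy-system of dimension $n+1$ on an interval $I\subset[0,\infty)$ with nonempty interior is a continuous piecewise linear map $\mathbf{P}=(P_1,\dots,P_{n+1}):I\to\mathbb{R}^{n+1}$ such that: (S1) for each $q\in I$, $0\le P_1(q)\le\cdots\le P_{n+1}(q)$ and $P_1(q)+\cdots+P_{n+1}(q)=q$; (S2) on every nonempty open subinterval $H$ of $I$ where $\mathbf{P}$ is differentiable, there are integers $1\le\underline r\le\bar r\le n+1$ such that $P_{\underline r},\dots,P_{\bar r}$ coincide on $H$ and have slope $1/(\bar r-\underline r+1)$, while every other component is constant on $H$; (S3) if $q$ is an interior point of $I$ where $\mathbf{P}$ is not differentiable, and $\underline r,\bar r,\underline s,\bar s$ are the integers with $P_j'(q^-)=1/(\bar r-\underline r+1)$ for $\underline r\le j\le\bar r$ and $P_j'(q^+)=1/(\bar s-\underline s+1)$ for $\underline s\le j\le\bar s$, and if $\underline r<\bar s$, then $P_{\underline r}(q)=P_{\underline r+1}(q)=\cdots=P_{\bar s}(q)$. The local contraction rate at a point $q$ where $\mathbf{P}$ is differentiable is $\delta(\mathbf{P},q)=n+1-\kappa$, where $\kappa=\min\{k:P_k'(q)>0\}$. The average contraction rate is $\Delta(\mathbf{P},Q)=\frac{1}{Q-Q_0}\int_{Q_0}^{Q}\delta(\mathbf{P},q)\,dq$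 for $Q>Q_0$, and the lower average contraction rate is $\underline{\delta}(\mathbf{P})=\liminf_{Q\to\infty}\Delta(\mathbf{P},Q)$. *)

(* Defs.v *)
From Stdlib Require Import Reals Lra ClassicalEpsilon.
Open Scope R_scope.

(* Components of P are indexed by j = 1, ..., n+1 (values at other indices
   are irrelevant). A map P : I -> R^(n+1) is represented as P : nat -> R -> R;
   its values outside I = [Q0, oo) are irrelevant. *)

Fixpoint sumP (P : nat -> R -> R) (m : nat) (q : R) : R :=
  match m with
  | O => 0
  | S k => sumP P k q + P (S k) q
  end.

Definition P_diff (n : nat) (P : nat -> R -> R) (q : R) : Prop :=
  forall j, (1 <= j <= S n)%nat -> exists l, derivable_pt_lim (P j) q l.

Definition left_deriv (f : R -> R) (q l : R) : Prop :=
  forall eps, 0 < eps -> exists delta, 0 < delta /\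
    forall h, - delta < h < 0 -> Rabs ((f (q + h) - f q) / h - l) < eps.
Definition right_deriv (f : R -> R) (q l : R) : Prop :=
  forall eps, 0 < eps -> exists delta, 0 < delta /\
    forall h, 0 < h < delta -> Rabs ((f (q + h) - f q) / h - l) < eps.

(* continuous piecewise linear on [Q0, oo): a locally finite subdivision
   Q0 = t_0 < t_1 < ... (unbounded) with every component affine on each
   closed piece [t_k, t_{k+1}] (this also gives continuity on I). *)
Definition piecewise_linear (n : nat) (Q0 : R) (P : nat -> R -> R) : Prop :=
  exists t : nat -> R,
    t O = Q0 /\ (forall k, t k < t (S k)) /\ (forall M, exists k, M <= t k) /\
    forall j k, (1 <= j <= S n)%nat -> exists a b, forall q,
      t k <= q <= t (S k) -> P j q = a * q + b.

Definition roy_S1 (n : nat) (Q0 : R) (P : nat -> R -> R) : Prop :=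
  forall q, Q0 <= q ->
    0 <= P 1%nat q /\
    (forall j, (1 <= j <= n)%nat -> P j q <= P (S j) q) /\
    sumP P (S n) q = q.

Definition roy_S2 (n : nat) (Q0 : R) (P : nat -> R -> R) : Prop :=
  forall a b, Q0 <= a -> a < b ->
    (forall q, a < q < b -> P_diff n P q) ->
    exists rlo rhi : nat, (1 <= rlo)%nat /\ (rlo <= rhi)%nat /\ (rhi <= S n)%nat /\
      (forall j, (rlo <= j <= rhi)%nat -> forall q, a < q < b ->
          P j q = P rlo q /\
          derivable_pt_lim (P j) q (1 / INR (rhi - rlo + 1))) /\
      (forall j, (1 <= j <= S n)%nat -> ~ (rlo <= j <= rhi)%nat ->
          forall q q', a < q < b -> a < q' < b -> P j q = P j q').

Definition roy_S3 (n : nat) (Q0 : R) (P : nat -> R -> R) : Prop :=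
  forall q, Q0 < q -> ~ P_diff n P q ->
    forall rlo rhi slo shi : nat,
      (1 <= rlo)%nat -> (rlo <= rhi)%nat -> (rhi <= S n)%nat ->
      (1 <= slo)%nat -> (slo <= shi)%nat -> (shi <= S n)%nat ->
      (forall j, (1 <= j <= S n)%nat ->
         left_deriv (P j) q
           (if ((rlo <=? j) && (j <=? rhi))%bool then 1 / INR (rhi - rlo + 1) else 0)) ->
      (forall j, (1 <= j <= S n)%nat ->
         right_deriv (P j) q
           (if ((slo <=? j) && (j <=? shi))%bool then 1 / INR (shi - slo + 1) else 0)) ->
      (rlo < shi)%nat ->
      forall j, (rlo <= j <= shi)%nat -> P j q = P rlo q.

Definition Roy_system (n : nat) (Q0 : R) (P : nat -> R -> R) : Prop :=
  0 <= Q0 /\ piecewise_linear n Q0 P /\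
  roy_S1 n Q0 P /\ roy_S2 n Q0 P /\ roy_S3 n Q0 P.

(* the derivative P_j'(q) (meaningful where it exists) *)
Definition deriv_at (f : R -> R) (q : R) : R :=
  epsilon (inhabits 0) (fun l => derivable_pt_lim f q l).

Fixpoint first_pos (f : nat -> R) (start fuel : nat) : nat :=
  match fuel with
  | O => start
  | S m => if Rlt_dec 0 (f start) then start else first_pos f (S start) m
  end.

Definition kappa (n : nat) (P : nat -> R -> R) (q : R) : nat :=
  first_pos (fun k => deriv_at (P k) q) 1 (S n).

(* local contraction rate delta(P,q) = n+1-kappa where P is differentiable
   (value 0 at the non-differentiability points, which are isolated and do
   not affect the integral) *)
Definition local_rate (n : nat) (P : nat -> R -> R) (q : R) : R :=
  match excluded_middle_informative (P_diff n P q) with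
  | left _ => INR (S n) - INR (kappa n P q)
  | right _ => 0
  end.

(* Riemann integral of f over [a,b] (0 if f is not Riemann integrable) *)
Definition integral (f : R -> R) (a b : R) : R :=
  match excluded_middle_informative (exists pr : Riemann_integrable f a b, True) with
  | left H => RiemannInt (proj1_sig (constructive_indefinite_description _ H))
  | right _ => 0
  end.

Definition avg_rate (n : nat) (Q0 : R) (P : nat -> R -> R) (Q : R) : R :=
  integral (local_rate n P) Q0 Q / (Q - Q0).

Definition is_liminf_infty (f : R -> R) (L : R) : Prop :=
  (forall eps, 0 < eps -> exists M, forall x, M <= x -> L - eps < f x) /\
  (forall eps, 0 < eps -> forall M, exists x, M <= x /\ f x < L + eps).

(* Main.v *)
Require Import Defs.
From Stdlib Require Import Reals Lra Lia Psatz ClassicalEpsilon.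
Open Scope R_scope.

Lemma affine_deriv (f : R -> R) (a b al be q : R) :
  a < q < b -> (forall y, a < y < b -> f y = al * y + be) ->
  derivable_pt_lim f q al.
Proof.
  intros Hq Hf eps Heps.
  assert (Hd : 0 < Rmin (q - a) (b - q)) by (apply Rmin_pos; lra).
  exists (mkposreal _ Hd). intros h Hh0 Hh. simpl in Hh.
  assert (H1 := Rmin_l (q - a) (b - q)). assert (H2 := Rmin_r (q - a) (b - q)).
  assert (Hh' := Rabs_def2 _ _ Hh).
  rewrite (Hf (q + h)) by lra. rewrite (Hf q) by lra.
  replace ((al * (q + h) + be - (al * q + be)) / h - al) with 0.
  - rewrite Rabs_R0; lra.
  - field; auto.
Qed.

Lemma deriv_at_eq (f : R -> R) (q l : R) :
  derivable_pt_lim f q l -> deriv_at f q = l.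
Proof.
  intros H. unfold deriv_at.
  assert (E := epsilon_spec (inhabits 0) (fun l => derivable_pt_lim f q l) (ex_intro _ l H)).
  exact (uniqueness_limite _ _ _ _ E H).
Qed.

Lemma first_pos_eq (f : nat -> R) (r : nat) : forall fuel start,
  (start <= r)%nat -> (r < start + fuel)%nat ->
  (forall j, (start <= j < r)%nat -> ~ 0 < f j) -> 0 < f r ->
  first_pos f start fuel = r.
Proof.
  induction fuel as [|m IH]; intros start H1 H2 H3 H4; [lia|].
  simpl. destruct (Rlt_dec 0 (f start)) as [h|h].
  - destruct (Nat.eq_dec start r); [auto|]. exfalso. apply (H3 start); auto; lia.
  - destruct (Nat.eq_dec start r) as [e|e]; [subst; contradiction|].
    apply IH; try lia; auto. intros j Hj; apply H3; lia.
Qed.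

Lemma sumP_diff (P : nat -> R -> R) (e : nat -> R) (x a : R) : forall m,
  (forall j, (1 <= j <= m)%nat -> P j x - P j a = e j * (x - a)) ->
  sumP P m x - sumP P m a = (x - a) * sumP (fun j _ => e j) m 0.
Proof.
  induction m as [|m IH]; intros H; simpl; [lra|].
  rewrite Rmult_plus_distr_l.
  assert (E1 := H (S m) ltac:(lia)).
  assert (E2 := IH ltac:(intros j Hj; apply H; lia)). rewrite Rmult_comm in E1. lra.
Qed.

Lemma sumE_count (rlo rhi : nat) (Hr : (1 <= rlo <= rhi)%nat) : forall m,
  sumP (fun j _ => if ((rlo <=? j) && (j <=? rhi))%bool then 1 / INR (rhi - rlo + 1) else 0) m 0
  * INR (rhi - rlo + 1) = INR (Nat.min m rhi - (rlo - 1)).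
Proof.
  assert (Hc : 0 < INR (rhi - rlo + 1)) by (apply lt_0_INR; lia).
  induction m as [|m IH]; cbn [sumP].
  - simpl. lra.
  - rewrite Rmult_plus_distr_r, IH.
    destruct (Nat.leb_spec rlo (S m)); destruct (Nat.leb_spec (S m) rhi); cbn [andb].
    + replace (Nat.min (S m) rhi - (rlo - 1))%nat with (S (Nat.min m rhi - (rlo - 1))) by lia.
      rewrite S_INR. unfold Rdiv. rewrite Rmult_1_l, Rinv_l by lra. lra.
    + replace (Nat.min (S m) rhi - (rlo - 1))%nat with (Nat.min m rhi - (rlo - 1))%nat by lia. lra.
    + replace (Nat.min (S m) rhi - (rlo - 1))%nat with (Nat.min m rhi - (rlo - 1))%nat by lia. lra.
    + lia.
Qed.

Lemma div_nonneg (x y : R) : 0 <= x -> 0 < y -> 0 <= x / y.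
Proof. intros; unfold Rdiv; apply Rmult_le_pos; [lra| left; apply Rinv_0_lt_compat; lra]. Qed.

Section Main.
Variables (n d : nat) (Q0 : R) (P : nat -> R -> R) (t : nat -> R).
Hypotheses (Hn : (2 <= n)%nat) (Hd : (d <= n - 1)%nat)
  (HS1 : roy_S1 n Q0 P) (HS2 : roy_S2 n Q0 P)
  (Ht0 : t O = Q0) (Htinc : forall k, t k < t (S k))
  (Hpw : forall j k, (1 <= j <= S n)%nat -> exists a b, forall q,
      t k <= q <= t (S k) -> P j q = a * q + b).

Lemma t_ge k : Q0 <= t k.
Proof. induction k; [rewrite Ht0; lra|]. specialize (Htinc k); lra. Qed.

Lemma piece k : exists s,
  (forall y, t k < y < t (S k) -> local_rate n P y <= INR d + INR (S n) * s) /\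
  (forall x, t k <= x <= t (S k) ->
     sumP P (n - d) x - sumP P (n - d) (t k) = (x - t k) * s).
Proof.
  set (a := t k). set (b := t (S k)).
  assert (Hab : a < b) by apply Htinc.
  assert (Qa : Q0 <= a) by apply t_ge.
  assert (Pd : forall q, a < q < b -> P_diff n P q).
  { intros q Hq j Hj. destruct (Hpw j k Hj) as (al & be & Hf). fold a b in Hf. exists al.
    apply (affine_deriv _ a b al be); auto. intros; apply Hf; unfold a, b in *; lra. }
  destruct (HS2 a b Qa Hab Pd) as (rlo & rhi & H1 & H2 & H3 & Hin & Hout).
  set (e := fun j : nat => if ((rlo <=? j) && (j <=? rhi))%bool then 1 / INR (rhi - rlo + 1) else 0).
  assert (Hc : 0 < INR (rhi - rlo + 1)) by (apply lt_0_INR; lia).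
  assert (Hcoef : forall j, (1 <= j <= S n)%nat -> exists al be,
     (forall q, a <= q <= b -> P j q = al * q + be) /\ al = e j).
  { intros j Hj. destruct (Hpw j k Hj) as (al & be & Hf). fold a b in Hf. exists al, be; split; [exact Hf|].
    assert (Dm : derivable_pt_lim (P j) ((a + b) / 2) al).
    { apply (affine_deriv _ a b al be); [lra|]. intros; apply Hf; lra. }
    assert (Hout' : ~ (rlo <= j <= rhi)%nat -> al = 0).
    { intros Hn'. assert (E := Hout j Hj Hn' ((a + b) / 2) ((a + 3 * b) / 4)
         ltac:(lra) ltac:(lra)).
      rewrite !Hf in E by lra.
      assert (E' : al * ((a + b) / 2 - (a + 3 * b) / 4) = 0) by lra.
      apply Rmult_integral in E'. destruct E'; [auto|lra]. }
    unfold e. destruct (Nat.leb_spec rlo j); destruct (Nat.leb_spec j rhi); cbn [andb].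
    - apply (uniqueness_limite (P j) ((a + b) / 2)); auto. apply Hin; [lia| lra].
    - apply Hout'; lia.
    - apply Hout'; lia.
    - apply Hout'; lia. }
  exists (sumP (fun j _ => e j) (n - d) 0). split.
  - intros y Hy. unfold local_rate.
    destruct (excluded_middle_informative (P_diff n P y)) as [_|C];
      [| exfalso; apply C, Pd; auto].
    assert (Hder : forall j, (1 <= j <= S n)%nat -> deriv_at (P j) y = e j).
    { intros j Hj. destruct (Hcoef j Hj) as (al & be & Hf & Eal).
      apply deriv_at_eq. rewrite <- Eal. apply (affine_deriv _ a b al be); [lra|].
      intros; apply Hf; lra. }
    unfold kappa. rewrite (first_pos_eq _ rlo); try lia.
    2:{ intros j Hj. rewrite Hder by lia. unfold e.
        destruct (Nat.leb_spec rlo j); [lia|]. cbn [andb]. lra. }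
    2:{ rewrite Hder by lia. unfold e.
        destruct (Nat.leb_spec rlo rlo); [|lia]. destruct (Nat.leb_spec rlo rhi); [|lia].
        cbn [andb]. unfold Rdiv. rewrite Rmult_1_l. apply Rinv_0_lt_compat; lra. }
    assert (Hcnt := sumE_count rlo rhi ltac:(lia) (n - d)). fold e in Hcnt.
    assert (Hnat : (S n * (rhi - rlo + 1) <= rlo * (rhi - rlo + 1) + d * (rhi - rlo + 1)
                     + S n * (Nat.min (n - d) rhi - (rlo - 1)))%nat).
    { destruct (Nat.le_gt_cases rlo (n - d)).
      - destruct (Nat.le_gt_cases rhi (n - d)).
        + replace (Nat.min (n - d) rhi - (rlo - 1))%nat with (rhi - rlo + 1)%nat by lia. nia.
        + replace (Nat.min (n - d) rhi - (rlo - 1))%nat with (n - d - rlo + 1)%nat by lia.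
          assert (rhi - rlo + 1 <= S n)%nat by lia.
          assert (S n <= rlo + d + (n - d - rlo + 1))%nat by lia. nia.
      - replace (Nat.min (n - d) rhi - (rlo - 1))%nat with 0%nat by lia.
        assert (S n <= rlo + d)%nat by lia. nia. }
    apply le_INR in Hnat. rewrite !plus_INR, !mult_INR in Hnat.
    set (s := sumP (fun j _ => e j) (n - d) 0) in *. set (c := INR (rhi - rlo + 1)) in *. set (cn := INR (Nat.min (n - d) rhi - (rlo - 1))) in *. change (s * c = cn) in Hcnt. apply (Rmult_le_reg_r c); [lra|]. nra.
  - intros x Hx. apply sumP_diff. intros j Hj.
    destruct (Hcoef j ltac:(lia)) as (al & be & Hf & Eal).
    rewrite (Hf x) by (unfold a, b in *; lra). rewrite (Hf a) by lra. rewrite <- Eal. ring.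
Qed.

Lemma int_bound : forall k x, Q0 <= x <= t k ->
  forall pr : Riemann_integrable (local_rate n P) Q0 x,
  RiemannInt pr <= INR d * (x - Q0) + INR (S n) * (sumP P (n - d) x - sumP P (n - d) Q0).
Proof.
  induction k as [|k IHk]; intros x Hx pr.
  - rewrite Ht0 in Hx. assert (x = Q0) by lra. subst x. rewrite RiemannInt_P9.
    replace (Q0 - Q0) with 0 by ring. lra.
  - destruct (Rle_dec x (t k)) as [Hle|Hgt]; [apply IHk; lra|].
    assert (Htk : Q0 <= t k) by apply t_ge.
    assert (pr1 := RiemannInt_P22 pr (conj Htk (Rlt_le _ _ (Rnot_le_lt _ _ Hgt)))).
    assert (pr2 := RiemannInt_P23 pr (conj Htk (Rlt_le _ _ (Rnot_le_lt _ _ Hgt)))).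
    rewrite <- (RiemannInt_P26 pr1 pr2 pr).
    destruct (piece k) as (s & Hl & Hs).
    assert (H2 : RiemannInt pr2 <= RiemannInt (RiemannInt_P14 (t k) x (INR d + INR (S n) * s))).
    { apply RiemannInt_P19; [lra|]. intros y Hy. unfold fct_cte. apply Hl; lra. }
    rewrite RiemannInt_P15 in H2.
    assert (H1 := IHk (t k) (conj Htk (Rle_refl _)) pr1).
    assert (Hsx := Hs x ltac:(lra)).
    replace (sumP P (n - d) x) with (sumP P (n - d) (t k) + (x - t k) * s) by lra.
    nra.
Qed.

Lemma P_nonneg q : Q0 <= q -> forall j, (1 <= j <= S n)%nat -> 0 <= P j q.
Proof.
  intros Hq. destruct (HS1 q Hq) as (H0 & Hm & _).
  induction j as [|j IH]; intros Hj; [lia|].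
  destruct j as [|j]; [exact H0|].
  specialize (Hm (S j) ltac:(lia)). specialize (IH ltac:(lia)). lra.
Qed.

Lemma sum_mono q : Q0 <= q -> forall m k, (m + k <= S n)%nat -> sumP P m q <= sumP P (m + k) q.
Proof.
  intros Hq m k. induction k as [|k IH]; intros Hk.
  - rewrite Nat.add_0_r; lra.
  - rewrite Nat.add_succ_r. simpl. specialize (IH ltac:(lia)).
    assert (0 <= P (S (m + k)) q) by (apply P_nonneg; auto; lia). lra.
Qed.

Lemma sum_bounds q m : Q0 <= q -> (m <= S n)%nat -> 0 <= sumP P m q <= q.
Proof.
  intros Hq Hm. split.
  - assert (H := sum_mono q Hq 0 m ltac:(lia)). simpl in H. exact H.
  - assert (H := sum_mono q Hq m (S n - m) ltac:(lia)).
    replace (m + (S n - m))%nat with (S n) in H by lia.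
    destruct (HS1 q Hq) as (_ & _ & E). lra.
Qed.

Hypothesis Hunb : forall M, exists k, M <= t k.
Hypothesis HQ0 : 0 <= Q0.

Lemma avg_bound Q : Q0 < Q ->
  avg_rate n Q0 P Q <= INR d + INR (S n) * (sumP P (n - d) Q / (Q - Q0)).
Proof.
  intros HQ. destruct (sum_bounds Q (n - d) ltac:(lra) ltac:(lia)) as [Hs0 HsQ].
  destruct (sum_bounds Q0 (n - d) ltac:(lra) ltac:(lia)) as [Hs00 _].
  assert (HN : 0 <= INR (S n)) by apply pos_INR.
  assert (Hdd : 0 <= INR d) by apply pos_INR.
  replace (INR d + INR (S n) * (sumP P (n - d) Q / (Q - Q0)))
    with ((INR d * (Q - Q0) + INR (S n) * sumP P (n - d) Q) / (Q - Q0)) by (field; lra).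
  unfold avg_rate, Rdiv. apply Rmult_le_compat_r; [left; apply Rinv_0_lt_compat; lra|].
  unfold integral. destruct (excluded_middle_informative _) as [H|H].
  - assert (pr := proj1_sig (constructive_indefinite_description _ H)).
    destruct (Hunb Q) as [k Hk].
    assert (B := int_bound k Q ltac:(lra) pr). rewrite (RiemannInt_P5 _ pr). nra.
  - nra.
Qed.

End Main.

Theorem mainTheorem7 (n d : nat) (Q0 : R) (P : nat -> R -> R)
  (Hn : (2 <= n)%nat) (Hd : (d <= n - 1)%nat)
  (HP : Roy_system n Q0 P)
  (Ldelta Lratio : R)
  (HLdelta : is_liminf_infty (avg_rate n Q0 P) Ldelta)
  (HLratio : is_liminf_infty (fun q => sumP P (n - d) q / q) Lratio) :
  Ldelta <= INR d + INR (S n) * Lratio.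
Proof.
  destruct HP as (HQ0 & (t & Ht0 & Htinc & Hunb & Hpw) & HS1 & HS2 & _).
  set (N := INR (S n)). set (dd := INR d).
  assert (HN : 0 <= N) by apply pos_INR.
  apply Rnot_lt_le. intros Hc.
  set (g := Ldelta - dd - N * Lratio).
  assert (Hg : 0 < g) by (unfold g; lra).
  set (eps := g / (2 * N + 1)).
  assert (Heps : 0 < eps) by (unfold eps; apply Rdiv_lt_0_compat; lra).
  destruct HLdelta as [HL1 _]. destruct HLratio as [_ HR2].
  destruct (HL1 eps Heps) as [M1 HM1].
  destruct (HR2 eps Heps (Rmax M1 (Q0 + 1 + Q0 / eps))) as (Q & HQ & HQr).
  assert (HQ1 := Rmax_l M1 (Q0 + 1 + Q0 / eps)).
  assert (HQ2 := Rmax_r M1 (Q0 + 1 + Q0 / eps)).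
  assert (HQQ : Q0 < Q).
  { assert (0 <= Q0 / eps) by (apply div_nonneg; lra). lra. }
  assert (Hav : avg_rate n Q0 P Q <= INR d + INR (S n) * (sumP P (n - d) Q / (Q - Q0))) by (eapply avg_bound; eauto).
  assert (Hlo := HM1 Q ltac:(lra)).
  assert (Hsb : 0 <= sumP P (n - d) Q <= Q) by (eapply sum_bounds; eauto; try lra; lia). destruct Hsb as [Hs0 HsQ].
  set (S := sumP P (n - d) Q) in *.
  assert (Hq0 : Q0 / (Q - Q0) < eps).
  { assert (E : eps * (Q0 / eps) = Q0) by (field; lra).
    assert (eps * (Q - Q0) > Q0) by nra.
    apply (Rmult_lt_reg_r (Q - Q0)); [lra|].
    unfold Rdiv. rewrite Rmult_assoc, Rinv_l, Rmult_1_r by lra. lra. }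
  assert (Hr1 : S / Q <= 1).
  { apply (Rmult_le_reg_r Q); [lra|]. unfold Rdiv. rewrite Rmult_assoc, Rinv_l by lra. lra. }
  assert (Hr0 : 0 <= S / Q) by (apply div_nonneg; lra).
  assert (Hq00 : 0 <= Q0 / (Q - Q0)) by (apply div_nonneg; lra).
  assert (Eq : S / (Q - Q0) = S / Q + (S / Q) * (Q0 / (Q - Q0))) by (field; lra).
  assert (HSb : S / (Q - Q0) <= S / Q + Q0 / (Q - Q0)) by nra.
  assert (Hge : eps * (2 * N + 1) = g) by (unfold eps; field; lra).
  fold N dd in Hav.
  assert (Ldelta - eps < dd + N * (Lratio + 2 * eps)) by nra.
  unfold g in Hge. nra.
Qed.
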